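(* Let $a>0$, $t_f>0$, $0<\lambda<1$, and real $u_L \neq u_R$. For $h>0$ let $\nu_h = \frac{a h (1-\lambda)}{2}$ and $$u_h(x) = \frac{u_L+u_R}{2} + \frac{u_R-u_L}{2}\operatorname{erf}\!\left(\frac{x-a t_f}{\sqrt{4\nu_h t_f}}\right), \qquad x\in\mathbb{R},$$ where $\operatorname{erf}(\zeta) = \frac{2}{\sqrt{\pi}}\int_0^\zeta e^{-s^2}\,ds$. Then there is a constant $C>0$ depending only on $a,t_f,\lambda,u_L,u_R$ (not on $h$) such that for all $h,h'>0$, $$\|u_h - u_{h'}\|_{L_1(\mathbb{R})} = C\,\left|\sqrt{h}-\sqrt{h'}\right|.$$ Consequently, for any pairwise distinct $h_1,h_2,h_3>0$ and any ordering $(i,j,k)$ of $\{1,2,3\}$, $\sigma = 1/2$ solves $$\frac{\|u_{h_i}-u_{h_j}\|_{L_1}}{\|u_{h_j}-u_{h_k}\|_{L_1}} = \frac{|h_i^\sigma - h_j^\sigma|}{|h_j^\sigma - h_k^\sigma|};$$ i.e. all three variants $\mathcal{R}(u_{h_1},u_{h_2},u_{h_3})$, $\mathcal{R}(u_{h_1},u_{h_3},u_{h_2})$, $\mathcal{R}(u_{h_2},u_{h_1},u_{h_3})$ of the Richardson convergence-rate estimate yield the rate $1/2$.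
   Context: Setting: $u_h$ is the solution at time $t_f$ of the truncated modified equation $U_t + aU_x - \nu_h U_{xx} = 0$ of the first-order upwind scheme $u_i^{n+1} = u_i^n - \lambda(u_i^n - u_{i-1}^n)$ (CFL number $\lambda = a\Delta t/h$, same $\lambda$ at all resolutions) for linear advection $u_t + a u_x=0$ with jump initial data $u=u_L$ for $x<0$, $u=u_R$ for $x\ge0$; it is taken as the model of the numerical solution at grid spacing $h$. Richardson convergence-rate estimate: $\mathcal{R}(v_1,v_2,v_3)$, for approximations $v_m$ at spacings $g_m$, denotes the solution $\sigma$ of $\frac{\|v_1-v_2\|}{\|v_2-v_3\|} = \frac{|g_1^\sigma-g_2^\sigma|}{|g_2^\sigma-g_3^\sigma|}$ with $\|\cdot\|$ the $L_1$ norm. *)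

(* Defs.v *)
From Stdlib Require Import Reals Lra.
From Coquelicot Require Import Coquelicot.
Open Scope R_scope.

Definition erf (z : R) : R :=
  2 / sqrt PI * RInt (fun s => exp (- (s ^ 2))) 0 z.

(* Numerical viscosity of the first-order upwind scheme *)
Definition nu_h (a lam h : R) : R := a * h * (1 - lam) / 2.

(* Solution at time tf of the truncated modified equation with jump data *)
Definition u_h (a tf lam uL uR h : R) (x : R) : R :=
  (uL + uR) / 2 + (uR - uL) / 2 * erf ((x - a * tf) / sqrt (4 * nu_h a lam h * tf)).

Definition L1dist (f g : R -> R) : R :=
  RInt_gen (fun x => Rabs (f x - g x)) (Rbar_locally m_infty) (Rbar_locally p_infty).

(* Main.v *)
Require Import Defs.
From Stdlib Require Import Reals Lra.
From Coquelicot Require Import Coquelicot.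
Open Scope R_scope.

Definition g (t : R) := exp (- (t ^ 2)).

Lemma g_cont x : continuous g x.
Proof. apply (@ex_derive_continuous R_AbsRing R_NormedModule). unfold g. auto_derive. auto. Qed.

Lemma g_ex a b : ex_RInt g a b.
Proof. apply (@ex_RInt_continuous R_CompleteNormedModule). intros; apply g_cont. Qed.

Lemma sqrtPI_pos : 0 < sqrt PI.
Proof. apply sqrt_lt_R0, PI_RGT_0. Qed.

Lemma erf_derive z : is_derive erf z (2 / sqrt PI * g z).
Proof.
  unfold erf. apply is_derive_scal.
  apply (is_derive_RInt g (RInt g 0) 0 z).
  - apply filter_forall. intros b. apply (@RInt_correct R_CompleteNormedModule), g_ex.
  - apply g_cont.
Qed.

Lemma erf_diff p q : erf p - erf q = 2 / sqrt PI * RInt g q p.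
Proof.
  unfold erf. change (fun s => exp (-(s^2))) with g. rewrite <- (RInt_Chasles g 0 q p) by apply g_ex.
  change (plus ?a ?b) with (a + b). fold g. ring.
Qed.

Lemma erf_mono p q : q <= p -> erf q <= erf p.
Proof.
  intros H. cut (0 <= erf p - erf q). lra.
  rewrite erf_diff. apply Rmult_le_pos.
  - apply Rlt_le, Rdiv_lt_0_compat; [lra| apply sqrtPI_pos].
  - apply RInt_ge_0; auto. apply g_ex. intros; unfold g; apply Rlt_le, exp_pos.
Qed.

Lemma isd_eq (f : R -> R) x l l' : is_derive f x l -> l = l' -> is_derive f x l'.
Proof. intros H E; rewrite <- E; exact H. Qed.

Lemma g_derive z : is_derive g z (- (2 * z) * g z).
Proof.
  unfold g. eapply isd_eq. auto_derive. auto. reflexivity. simpl; ring.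
Qed.

Definition Fz z := z * erf z + g z / sqrt PI.

Lemma Fz_derive z : is_derive Fz z (erf z).
Proof.
  unfold Fz. eapply isd_eq.
  apply (@is_derive_plus R_AbsRing R_NormedModule).
  apply (@is_derive_mult R_AbsRing). apply (@is_derive_id R_AbsRing). apply erf_derive.
  intros; apply Rmult_comm.
  apply (is_derive_ext (fun t => / sqrt PI * g t)). intros t; unfold Rdiv; apply Rmult_comm.
  apply is_derive_scal, g_derive.
  repeat change (plus ?a ?b) with (a + b). repeat change (mult ?a ?b) with (a * b).
  change (@one R_AbsRing) with 1. match goal with |- ?a = ?b => change (@eq R a b) end. cbv beta. field. apply Rgt_not_eq, sqrtPI_pos.
Qed.

Lemma Gs_derive s c x : 0 < s -> is_derive (fun x => s * Fz ((x - c) / s)) x (erf ((x - c) / s)).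
Proof.
  intros Hs. eapply isd_eq. apply is_derive_scal.
  apply (@is_derive_comp R_AbsRing R_NormedModule Fz (fun x => (x - c) / s)).
  apply Fz_derive. auto_derive. auto.
  reflexivity. change (scal ?a ?b) with (a * b). match goal with |- ?a = ?b => change (@eq R a b) end. field. lra.
Qed.

Lemma g_le x w : w ^ 2 <= x ^ 2 -> g x <= g w.
Proof. intros H; unfold g. destruct (Req_dec (x^2) (w^2)) as [E|E].
  rewrite E; lra. apply Rlt_le, exp_increasing. lra. Qed.

Lemma RInt_g_le u v w : u <= v -> (forall x, u <= x <= v -> w ^ 2 <= x ^ 2) ->
  0 <= RInt g u v <= (v - u) * g w.
Proof.
  intros Huv Hx. split.
  - apply RInt_ge_0; auto. apply g_ex. intros; unfold g; apply Rlt_le, exp_pos.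
  - eapply Rle_trans; [apply Rle_abs|].
    apply (@norm_RInt_le_const R_NormedModule g u v); auto.
    intros x Hx'. change (norm (g x)) with (Rabs (g x)).
    rewrite Rabs_pos_eq by (unfold g; apply Rlt_le, exp_pos). apply g_le, Hx; auto.
    apply (@RInt_correct R_CompleteNormedModule), g_ex.
Qed.

Lemma erf_diff_bound p q : (0 <= q <= p \/ p <= q <= 0) ->
  Rabs (erf p - erf q) <= 2 / sqrt PI * Rabs (p - q) * g q.
Proof.
  assert (Hk : 0 < 2 / sqrt PI) by (apply Rdiv_lt_0_compat; [lra| apply sqrtPI_pos]).
  intros [H|H].
  - rewrite erf_diff. destruct (RInt_g_le q p q) as [A B]; try lra.
    intros; nra. rewrite Rabs_pos_eq by nra. rewrite (Rabs_pos_eq (p - q)) by lra.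
    rewrite Rmult_assoc. apply Rmult_le_compat_l; lra.
  - replace (erf p - erf q) with (- (erf q - erf p)) by ring.
    rewrite Rabs_Ropp, erf_diff. destruct (RInt_g_le p q q) as [A B]; try lra.
    intros; nra. rewrite Rabs_pos_eq by nra. rewrite (Rabs_left1 (p - q)) by lra.
    rewrite Rmult_assoc. apply Rmult_le_compat_l; lra.
Qed.

Lemma exp_sq_lb w : 0 <= w -> (1 + w / 2) ^ 2 <= exp w.
Proof.
  intros Hw. replace w with (w/2 + w/2) at 2 by field. rewrite exp_plus.
  pose proof (exp_ineq1_le (w/2)). simpl. rewrite Rmult_1_r.
  apply Rmult_le_compat; lra.
Qed.

Lemma decay A B e w : 0 <= A -> 0 < B -> 0 < e -> 1 < w -> 4 * (A + B) / e < w ->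
  (A * w + B) * exp (- w) < e.
Proof.
  intros HA HB He H1 HT. rewrite exp_Ropp.
  pose proof (exp_sq_lb w ltac:(lra)) as HE.
  assert (Hpos : 0 < exp w) by apply exp_pos.
  assert (H4 : 4 * (A + B) < e * w).
  { apply (Rmult_lt_compat_r e) in HT; auto. unfold Rdiv in HT.
    rewrite Rmult_assoc, Rinv_l in HT by lra. lra. }
  apply (Rmult_lt_reg_r (exp w)); auto.
  rewrite Rmult_assoc, Rinv_l by lra. rewrite Rmult_1_r.
  assert (A * w + B <= (A + B) * w) by nra.
  assert (w * w / 4 <= exp w) by (simpl in HE; nra).
  nra.
Qed.

Definition Gf s s' c x := s * Fz ((x - c) / s) - s' * Fz ((x - c) / s').

Lemma Gf_small s s' c e : 0 < s <= s' -> 0 < e ->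
  exists M, 0 <= M /\ forall x, M < Rabs (x - c) -> Rabs (Gf s s' c x) < e.
Proof.
  intros [Hs Hss] He.
  assert (HP : 0 < sqrt PI) by apply sqrtPI_pos.
  set (K := 2 / sqrt PI * (/ s - / s')).
  set (A := K * s' ^ 2). set (B := (s + s') / sqrt PI).
  assert (HK : 0 <= K).
  { unfold K. apply Rmult_le_pos. apply Rlt_le, Rdiv_lt_0_compat; lra.
    assert (/ s' <= / s) by (apply Rinv_le_contravar; lra). lra. }
  assert (HA : 0 <= A) by (unfold A; apply Rmult_le_pos; auto; apply pow_le; lra).
  assert (HB : 0 < B) by (unfold B; apply Rdiv_lt_0_compat; lra).
  set (T := 4 * (A + B) / e).
  assert (HT : 0 <= T) by (unfold T; apply Rlt_le, Rdiv_lt_0_compat; lra).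
  exists (s' * (1 + T)). split. apply Rmult_le_pos; lra.
  intros x Hx. set (y := x - c) in *.
  set (w := (y / s') ^ 2).
  assert (Hw1 : (1 + T) < Rabs y / s').
  { apply (Rmult_lt_reg_l s'); [lra|]. field_simplify; lra. }
  assert (Hw : (1 + T) ^ 2 < w).
  { unfold w. rewrite <- (pow2_abs (y / s')).
    replace (Rabs (y / s')) with (Rabs y / s') by (unfold Rdiv; rewrite Rabs_mult, Rabs_inv, (Rabs_pos_eq s') by lra; reflexivity).
    assert (0 <= 1 + T) by lra. simpl. rewrite !Rmult_1_r. apply Rmult_le_0_lt_compat; lra. }
  assert (Hbound : Rabs (Gf s s' c x) <= (A * w + B) * exp (- w)).
  { unfold Gf, Fz. fold y.
    replace (s * ((y / s) * erf (y / s) + g (y / s) / sqrt PI) -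
             s' * ((y / s') * erf (y / s') + g (y / s') / sqrt PI))
      with (y * (erf (y / s) - erf (y / s')) + (s * g (y/s) - s' * g (y / s')) / sqrt PI)
      by (field; lra).
    assert (Hg : g (y / s) <= g (y / s')).
    { apply g_le. replace (y / s') with (y / s * (s / s')) by (field; lra).
      assert (0 < s / s') by (apply Rdiv_lt_0_compat; lra).
      assert (s / s' <= 1) by (apply (Rmult_le_reg_r s'); [lra|]; field_simplify; lra).
      simpl. rewrite !Rmult_1_r. set (a0 := y / s) in *. set (q := s / s') in *.
      replace (a0 * q * (a0 * q)) with ((a0 * a0) * (q * q)) by ring.
      assert (0 <= a0 * a0) by nra.
      assert (q * q <= 1). { pose proof (Rmult_le_compat q 1 q 1). lra. }
      rewrite <- (Rmult_1_r (a0 * a0)) at 2. apply Rmult_le_compat_l; auto. }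
    assert (Hgw : g (y / s') = exp (- w)) by reflexivity.
    assert (Hg0 : 0 < g (y / s)) by apply exp_pos.
    assert (Hd : Rabs (erf (y / s) - erf (y / s')) <= 2 / sqrt PI * Rabs (y / s - y / s') * g (y / s')).
    { apply erf_diff_bound. destruct (Rle_lt_dec 0 y).
      left. split. apply Rdiv_le_0_compat; lra.
      unfold Rdiv; apply Rmult_le_compat_l; auto. apply Rinv_le_contravar; lra.
      right. split. unfold Rdiv. apply Rmult_le_compat_neg_l; try lra.
      apply Rinv_le_contravar; lra.
      apply Rlt_le. unfold Rdiv. apply Rmult_neg_pos; try lra. apply Rinv_0_lt_compat; lra. }
    replace (y / s - y / s') with (y * (/ s - / s')) in Hd by (field; lra).
    rewrite Rabs_mult, (Rabs_pos_eq (/ s - / s')) in Hd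
      by (assert (/ s' <= / s) by (apply Rinv_le_contravar; lra); lra).
    eapply Rle_trans; [apply Rabs_triang|].
    rewrite Rabs_mult.
    assert (Hy2 : Rabs y * Rabs y = w * s' ^ 2).
    { unfold w. rewrite <- Rabs_mult. rewrite Rabs_pos_eq by nra. field. lra. }
    assert (H2 : Rabs ((s * g (y / s) - s' * g (y / s')) / sqrt PI) <= B * exp (- w)).
    { unfold Rdiv. rewrite Rabs_mult, Rabs_inv, (Rabs_pos_eq (sqrt PI)) by lra.
      unfold B. rewrite <- Hgw. unfold Rdiv.
      assert (0 < g (y / s')) by apply exp_pos.
      assert (Rabs (s * g (y / s) - s' * g (y / s')) <= (s + s') * g (y / s')).
      { apply Rabs_le. split; nra. }
      assert (0 < / sqrt PI) by (apply Rinv_0_lt_compat; lra). nra. }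
    assert (H1 : Rabs y * Rabs (erf (y / s) - erf (y / s')) <= A * w * exp (- w)).
    { rewrite <- Hgw.
      apply Rle_trans with (Rabs y * (2 / sqrt PI * (Rabs y * (/ s - / s')) * g (y / s'))).
      apply Rmult_le_compat_l; auto. apply Rabs_pos.
      unfold A, K. right.
      replace (Rabs y * (2 / sqrt PI * (Rabs y * (/ s - / s')) * g (y / s')))
        with ((Rabs y * Rabs y) * (2 / sqrt PI * (/ s - / s')) * g (y / s')) by ring.
      rewrite Hy2. ring. }
    lra. }
  assert (1 + T <= (1 + T) ^ 2) by (simpl; rewrite Rmult_1_r; assert (0 <= T * T) by (apply Rmult_le_pos; lra); lra).
  eapply Rle_lt_trans; [exact Hbound|]. apply decay; auto; fold T; lra.
Qed.

Lemma erfc_ex_derive c s x : 0 < s -> ex_derive (fun x => erf ((x - c) / s)) x.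
Proof.
  intros Hs. eexists.
  apply (@is_derive_comp R_AbsRing R_NormedModule erf (fun x => (x - c) / s)).
  apply erf_derive. auto_derive. auto. reflexivity.
Qed.

Definition dfun k s s' c x := k * (erf ((x - c) / s) - erf ((x - c) / s')).

Lemma dfun_cont k s s' c x : 0 < s -> 0 < s' -> continuous (dfun k s s' c) x.
Proof.
  intros Hs Hs'. apply (@ex_derive_continuous R_AbsRing R_NormedModule).
  unfold dfun. apply ex_derive_scal.
  apply (@ex_derive_minus R_AbsRing R_NormedModule (fun x => erf ((x - c) / s)) (fun x => erf ((x - c) / s'))).
  apply erfc_ex_derive; auto. apply erfc_ex_derive; auto.
Qed.

Lemma Gf_derive k s s' c x : 0 < s -> 0 < s' ->
  is_derive (fun x => k * Gf s s' c x) x (dfun k s s' c x).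
Proof.
  intros Hs Hs'. unfold dfun, Gf. apply is_derive_scal.
  apply (@is_derive_minus R_AbsRing R_NormedModule); apply Gs_derive; auto.
Qed.

Lemma Gf_c s s' c : Gf s s' c c = (s - s') / sqrt PI.
Proof.
  unfold Gf, Fz. replace ((c - c) / s) with 0 by (unfold Rdiv; ring).
  replace ((c - c) / s') with 0 by (unfold Rdiv; ring).
  unfold g. replace (- (0 ^ 2)) with 0 by ring. rewrite exp_0. field.
  apply Rgt_not_eq, sqrtPI_pos.
Qed.

Lemma key c s s' k : 0 < s <= s' ->
  is_RInt_gen (fun x => Rabs (k * (erf ((x - c) / s) - erf ((x - c) / s'))))
    (Rbar_locally m_infty) (Rbar_locally p_infty) (2 * Rabs k * (s' - s) / sqrt PI).
Proof.
  intros [Hs Hss]. assert (Hs' : 0 < s') by lra.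
  assert (HP := sqrtPI_pos).
  set (K := Rabs k). assert (HK : 0 <= K) by apply Rabs_pos.
  set (f := fun x => Rabs (k * (erf ((x - c) / s) - erf ((x - c) / s')))).
  assert (Hright : forall b, c <= b -> is_RInt f c b (K * Gf s s' c b - K * Gf s s' c c)).
  { intros b Hb. apply (is_RInt_ext (dfun K s s' c)).
    - intros x Hx. rewrite Rmin_left, Rmax_right in Hx by lra.
      unfold f, dfun, K. rewrite Rabs_mult. f_equal. symmetry. apply Rabs_pos_eq.
      cut (erf ((x - c) / s') <= erf ((x - c) / s)). lra.
      apply erf_mono. unfold Rdiv. apply Rmult_le_compat_l. lra.
      apply Rinv_le_contravar; lra.
    - apply (@is_RInt_derive R_CompleteNormedModule (fun x => K * Gf s s' c x)).
      intros; apply Gf_derive; auto. intros; apply dfun_cont; auto. }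
  assert (Hleft : forall a, a <= c -> is_RInt f a c (- K * Gf s s' c c - (- K) * Gf s s' c a)).
  { intros a Ha. apply (is_RInt_ext (dfun (- K) s s' c)).
    - intros x Hx. rewrite Rmin_left, Rmax_right in Hx by lra.
      unfold f, dfun, K. rewrite Rabs_mult.
      rewrite (Rabs_left1 (erf ((x - c) / s) - erf ((x - c) / s'))). match goal with |- ?a = ?b => change (@eq R a b) end; ring.
      cut (erf ((x - c) / s) <= erf ((x - c) / s')). lra.
      apply erf_mono. unfold Rdiv. apply Rmult_le_compat_neg_l. lra.
      apply Rinv_le_contravar; lra.
    - apply (@is_RInt_derive R_CompleteNormedModule (fun x => - K * Gf s s' c x)).
      intros; apply Gf_derive; auto. intros; apply dfun_cont; auto. }
  apply filterlimi_locally. intros eps.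
  destruct (Gf_small s s' c (eps / (2 * K + 1))) as [M [HM HGM]]; try lra.
  apply Rdiv_lt_0_compat; [apply cond_pos| lra].
  apply (Filter_prod _ _ _ (fun a => a < c - M) (fun b => c + M < b)).
  exists (c - M); auto. exists (c + M); auto.
  intros a b Ha Hb. simpl.
  exists (plus (- K * Gf s s' c c - (- K) * Gf s s' c a) (K * Gf s s' c b - K * Gf s s' c c)).
  split. apply (@is_RInt_Chasles R_NormedModule) with c; [apply Hleft | apply Hright]; lra.
  change (Rabs ((plus (- K * Gf s s' c c - (- K) * Gf s s' c a) (K * Gf s s' c b - K * Gf s s' c c))
     - 2 * Rabs k * (s' - s) / sqrt PI) < eps).
  change (plus ?x ?y) with (x + y). rewrite Gf_c. fold K.
  replace (- K * ((s - s') / sqrt PI) - - K * Gf s s' c a + (K * Gf s s' c b - K * ((s - s') / sqrt PI)) -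
     2 * K * (s' - s) / sqrt PI) with (K * (Gf s s' c a + Gf s s' c b)) by (field; lra).
  assert (Ea : Rabs (Gf s s' c a) < eps / (2 * K + 1)).
  { apply HGM. rewrite Rabs_left1; lra. }
  assert (Eb : Rabs (Gf s s' c b) < eps / (2 * K + 1)).
  { apply HGM. rewrite Rabs_pos_eq; lra. }
  rewrite Rabs_mult, (Rabs_pos_eq K) by auto.
  pose proof (Rabs_triang (Gf s s' c a) (Gf s s' c b)).
  assert (Hq : K * (2 * (eps / (2 * K + 1))) < eps).
  { pose proof (cond_pos eps). apply (Rmult_lt_reg_r (2 * K + 1)); [lra|].
    field_simplify; try lra. }
  assert (K * Rabs (Gf s s' c a + Gf s s' c b) <= K * (2 * (eps / (2 * K + 1)))).
  { apply Rmult_le_compat_l; auto. lra. }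
  lra.
Qed.

Lemma s_eq a tf lam h : 0 < a -> 0 < tf -> 0 < lam < 1 -> 0 < h ->
  sqrt (4 * nu_h a lam h * tf) = sqrt (2 * a * (1 - lam) * tf) * sqrt h.
Proof.
  intros. rewrite <- sqrt_mult. f_equal. unfold nu_h; field.
  apply Rlt_le. repeat apply Rmult_lt_0_compat; lra. lra.
Qed.

Lemma part1 a tf lam uL uR h h' : 0 < a -> 0 < tf -> 0 < lam < 1 -> 0 < h -> 0 < h' -> h <= h' ->
  is_RInt_gen
    (fun x => Rabs (u_h a tf lam uL uR h x - u_h a tf lam uL uR h' x))
    (Rbar_locally m_infty) (Rbar_locally p_infty)
    (2 * Rabs ((uR - uL) / 2) * sqrt (2 * a * (1 - lam) * tf) / sqrt PI * Rabs (sqrt h - sqrt h')).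
Proof.
  intros Ha Htf Hl Hh Hh' Hhh.
  set (k0 := sqrt (2 * a * (1 - lam) * tf)).
  assert (Hk0 : 0 < k0) by (apply sqrt_lt_R0; repeat apply Rmult_lt_0_compat; lra).
  assert (Hsq : sqrt h <= sqrt h') by (apply sqrt_le_1; lra).
  assert (Hsp : 0 < sqrt h) by (apply sqrt_lt_R0; lra).
  eapply (is_RInt_gen_ext (fun x => Rabs ((uR - uL) / 2 * (erf ((x - a * tf) / (k0 * sqrt h)) - erf ((x - a * tf) / (k0 * sqrt h')))))).
  - apply filter_forall. intros ab x _. f_equal. unfold u_h. rewrite !s_eq by auto. fold k0. ring.
  - replace (2 * Rabs ((uR - uL) / 2) * k0 / sqrt PI * Rabs (sqrt h - sqrt h'))
      with (2 * Rabs ((uR - uL) / 2) * (k0 * sqrt h' - k0 * sqrt h) / sqrt PI).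
    apply key. split. apply Rmult_lt_0_compat; lra. apply Rmult_le_compat_l; lra.
    rewrite (Rabs_left1 (sqrt h - sqrt h')) by lra. field. apply Rgt_not_eq, sqrtPI_pos.
Qed.

Theorem mainTheorem2 (a tf lam uL uR : R) :
  0 < a -> 0 < tf -> 0 < lam < 1 -> uL <> uR ->
  exists C : R, 0 < C /\
    (forall h h' : R, 0 < h -> 0 < h' ->
       is_RInt_gen
         (fun x => Rabs (u_h a tf lam uL uR h x - u_h a tf lam uL uR h' x))
         (Rbar_locally m_infty) (Rbar_locally p_infty)
         (C * Rabs (sqrt h - sqrt h'))) /\
    (forall hi hj hk : R, 0 < hi -> 0 < hj -> 0 < hk ->
       hi <> hj -> hj <> hk -> hi <> hk ->
       L1dist (u_h a tf lam uL uR hi) (u_h a tf lam uL uR hj)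
         / L1dist (u_h a tf lam uL uR hj) (u_h a tf lam uL uR hk)
       = Rabs (Rpower hi (1/2) - Rpower hj (1/2))
         / Rabs (Rpower hj (1/2) - Rpower hk (1/2))).
Proof.
  intros Ha Htf Hl HuLR.
  set (C := 2 * Rabs ((uR - uL) / 2) * sqrt (2 * a * (1 - lam) * tf) / sqrt PI).
  assert (HC : 0 < C).
  { unfold C. apply Rdiv_lt_0_compat; [|apply sqrtPI_pos].
    apply Rmult_lt_0_compat. apply Rmult_lt_0_compat. lra.
    apply Rabs_pos_lt. intro E. apply HuLR. lra.
    apply sqrt_lt_R0; repeat apply Rmult_lt_0_compat; lra. }
  assert (P1 : forall h h' : R, 0 < h -> 0 < h' ->
       is_RInt_gen
         (fun x => Rabs (u_h a tf lam uL uR h x - u_h a tf lam uL uR h' x))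
         (Rbar_locally m_infty) (Rbar_locally p_infty)
         (C * Rabs (sqrt h - sqrt h'))).
  { intros h h' Hh Hh'. destruct (Rle_lt_dec h h') as [Hle|Hlt].
    - apply part1; auto.
    - rewrite Rabs_minus_sym.
      eapply (is_RInt_gen_ext (fun x => Rabs (u_h a tf lam uL uR h' x - u_h a tf lam uL uR h x))).
      + apply filter_forall. intros ab x _. apply Rabs_minus_sym.
      + apply part1; auto; lra. }
  exists C. split; auto. split; auto.
  intros hi hj hk Hi Hj Hk Hij Hjk Hik.
  unfold L1dist.
  rewrite (is_RInt_gen_unique _ _ (P1 hi hj Hi Hj)).
  rewrite (is_RInt_gen_unique _ _ (P1 hj hk Hj Hk)).
  replace (1/2) with (/2) by field.
  rewrite !Rpower_sqrt by auto.
  assert (sqrt hj - sqrt hk <> 0).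
  { intro E. apply Hjk. apply sqrt_inj; lra. }
  assert (Rabs (sqrt hj - sqrt hk) <> 0) by (apply Rabs_no_R0; auto).
  field. split; auto. lra.
Qed.
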